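(* Let $c\geq 2$ be an integer such that $c+1$ is a prime power. Then $R_{c,c+2}=\frac{c+2}{c}$, i.e., $\lim_{q\to\infty} M_{c,c+2}(q)/q^{2}=\frac{c+2}{c}$.
   Context: For $P\subseteq F^l$ over a finite alphabet $F$, $desc(P)=\{x\in F^l: \text{for every } i\in\{1,\ldots,l\} \text{ there is } y\in P \text{ with } x_i=y_i\}$. For an integer $c\geq 2$, a $c$-frameproof code of length $l$ is a subset $C\subseteq F^l$ with $desc(P)\cap C=P$ for every $P\subseteq C$ with $|P|\leq c$; it is $q$-ary if $|F|=q$. $M_{c,l}(q)$ denotes the largest cardinality of a $q$-ary $c$-frameproof code of length $l$, and $R_{c,l}=\lim_{q\to\infty} M_{c,l}(q)/q^{\lceil l/c\rceil}$ (note $\lceil (c+2)/c\rceil=2$ for $c\geq 2$). *)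

(* Defs.v *)
From HB Require Import structures.
From mathcomp Require Import all_boot all_order all_algebra.
From mathcomp Require Import all_classical all_reals topology normedtype sequences.
Set Implicit Arguments. Unset Strict Implicit. Unset Printing Implicit Defensive.

Definition word (q l : nat) := {ffun 'I_l -> 'I_q}.

Definition desc (q l : nat) (P : {set word q l}) : {set word q l} :=
  [set x : word q l | [forall i : 'I_l, [exists y in P, x i == y i]]].

Definition frameproof (c q l : nat) (C : {set word q l}) : bool :=
  [forall P : {set word q l}, (P \subset C) && (#|P| <= c)%N ==> (desc P :&: C == P)].

Definition M (c l q : nat) : nat :=
  \max_(C : {set word q l} | frameproof c C) #|C|.

Definition prime_power (n : nat) : Prop :=
  exists p k : nat, prime p /\ (0 < k)%N /\ n = (p ^ k)%N.

(* Main.v *)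
Require Import Defs.
From HB Require Import structures.
From mathcomp Require Import all_boot all_order all_algebra.
From mathcomp Require Import all_classical all_reals topology normedtype sequences.
From mathcomp Require Import all_field zify ring.
Import Order.TTheory GRing.Theory Num.Theory.
Import numFieldNormedType.Exports.
Set Implicit Arguments. Unset Strict Implicit. Unset Printing Implicit Defensive.

Lemma frameP c q n (C P : {set word q n}) x :
  frameproof c C -> P \subset C -> #|P| <= c -> x \in C -> x \in desc P -> x \in P.
Proof.
move=> /forallP /(_ P) /implyP H PC Pc xC xd.
have /eqP <- := H (introT andP (conj PC Pc)).
by rewrite inE xd xC.
Qed.

Lemma descP q n (P : {set word q n}) (x : word q n) :
  (forall i, exists2 y, y \in P & x i = y i) -> x \in desc P.
Proof.
move=> H; rewrite inE; apply/forallP => i; have [y yP e] := H i.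
by apply/existsP; exists y; rewrite yP e eqxx.
Qed.

Lemma desc_self q n (P : {set word q n}) : P \subset desc P.
Proof. by apply/fintype.subsetP => x xP; apply: descP => i; exists x. Qed.

Definition uniq1 q n (C : {set word q n}) (x : word q n) (k : 'I_n) : bool :=
  [forall y in C, (y k == x k) ==> (y == x)].
Definition uniq2 q n (C : {set word q n}) (x : word q n) (p : 'I_n * 'I_n) : bool :=
  [forall y in C, ((y p.1 == x p.1) && (y p.2 == x p.2)) ==> (y == x)].

Lemma two_pairs c q (C : {set word q c.+2}) x a b d e :
  frameproof c C -> x \in C -> (forall k, ~~ uniq1 C x k) ->
  uniq [:: a; b; d; e] -> uniq2 C x (a, b) || uniq2 C x (d, e).
Proof.
move=> FC xC nu1 us.
apply/negPn/negP; rewrite negb_or => /andP[/forallPn[y1 H1] /forallPn[y2 H2]].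
rewrite !negb_imply /= in H1 H2.
case/and3P: H1 => y1C /andP[/eqP y1a /eqP y1b] y1x.
case/and3P: H2 => y2C /andP[/eqP y2d /eqP y2e] y2x.
pose f k := odflt x [pick y in C | (y k == x k) && (y != x)].
have fP k : [&& f k \in C, f k k == x k & f k != x].
  rewrite /f; case: pickP => [y /andP[yC /andP[-> ->]] | none] /=; first by rewrite yC.
  have /forallPn[y Hy] := nu1 k; rewrite negb_imply in Hy.
  case/andP: Hy => yC; rewrite negb_imply => /andP[yk yx].
  by move: (none y); rewrite yC yk yx.
pose s := [:: a; b; d; e].
pose K := [set k | k \notin s].
pose P := y1 |: (y2 |: [set f k | k in K]).
have cK : #|K| + 4 = c.+2.
  have h4 : #|[set k | k \in s]| = 4.
    have -> : #|[set k | k \in s]| = #|s| by apply: eq_card => k; rewrite inE.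
    by rewrite (card_uniqP us).
  have E := cardsC [set k | k \in s].
  have E2 : ~: [set k | k \in s] = K by apply/setP => k; rewrite !inE.
  by rewrite E2 card_ord h4 addnC in E.
have PC : P \subset C.
  apply/fintype.subsetP => y; rewrite !inE => /or3P[/eqP->|/eqP->|/imsetP[k _ ->]] //.
  by case/and3P: (fP k).
have Pc : #|P| <= c.
  have h1 : #|P| <= 1 + (1 + #|K|).
    apply: (leq_trans (leq_card_setU _ _)); rewrite cards1 leq_add2l.
    apply: (leq_trans (leq_card_setU _ _)); rewrite cards1 leq_add2l.
    exact: leq_imset_card.
  lia.
have xd : x \in desc P.
  apply: descP => i.
  case: (boolP (i \in s)) => [|iK].
    rewrite !inE => /or4P[/eqP->|/eqP->|/eqP->|/eqP->].
    - by exists y1; rewrite ?inE ?eqxx.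
    - by exists y1; rewrite ?inE ?eqxx.
    - by exists y2; rewrite ?inE ?eqxx ?orbT.
    - by exists y2; rewrite ?inE ?eqxx ?orbT.
  exists (f i); last by case/and3P: (fP i) => _ /eqP.
  by rewrite /P !in_setU1 imset_f ?orbT // inE.
have := frameP FC PC Pc xC xd.
rewrite !inE => /or3P[/eqP e1|/eqP e2|/imsetP[k _ ek]].
- by move: y1x; rewrite e1 eqxx.
- by move: y2x; rewrite e2 eqxx.
- by case/and3P: (fP k) => _ _; rewrite -ek eqxx.
Qed.

Lemma star n (N : {set 'I_n * 'I_n}) a :
  (forall p, p \in N -> p.1 != p.2) -> (forall p, p \in N -> (p.1 == a) || (p.2 == a)) ->
  #|N| <= 2 * n.-1.
Proof.
move=> Hd Ha.
have sub : N \subset [set (a, j) | j in [set~ a]] :|: [set (i, a) | i in [set~ a]].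
  apply/fintype.subsetP => [[u v]] pN; have := Hd _ pN; have := Ha _ pN; rewrite /= => /orP[/eqP->|/eqP->] uv.
    by apply/setUP; left; apply/imsetP; exists v; last by []; rewrite in_setC1 eq_sym.
  by apply/setUP; right; apply/imsetP; exists u; last by []; rewrite in_setC1.
apply: (leq_trans (subset_leq_card sub)); apply: (leq_trans (leq_card_setU _ _)).
rewrite mul2n -addnn; apply: leq_add; apply: (leq_trans (leq_imset_card _ _));
by rewrite cardsC1 card_ord.
Qed.


Lemma ekr n (N : {set 'I_n * 'I_n}) : 3 < n ->
  (forall p, p \in N -> p.1 != p.2) ->
  (forall p p', p \in N -> p' \in N ->
     [|| p.1 == p'.1, p.1 == p'.2, p.2 == p'.1 | p.2 == p'.2]) ->
  #|N| <= 2 * n.-1.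
Proof.
move=> n3 Hd Hi.
case: (set_0Vmem N) => [->|[[a b] abN]]; first by rewrite cards0.
have ab := Hd _ abN; rewrite /= in ab.
case: (boolP [forall p in N, (p.1 == a) || (p.2 == a)]) => [/forall_inP Ha|/forall_inPn[p1 p1N Hp1]].
  exact: star Hd Ha.
case: (boolP [forall p in N, (p.1 == b) || (p.2 == b)]) => [/forall_inP Hb|/forall_inPn[p2 p2N Hp2]].
  exact: star Hd Hb.
case: p1 p1N Hp1 => u1 v1 p1N; case: p2 p2N Hp2 => u2 v2 p2N /=.
rewrite !negb_or => /andP[u2b v2b] /andP[u1a v1a].
have h1 := Hi _ _ p1N abN; have h2 := Hi _ _ p2N abN; have h12 := Hi _ _ p1N p2N.
have d1 := Hd _ p1N; have d2 := Hd _ p2N; rewrite /= in h1 h2 h12 d1 d2.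
have hb1 : (u1 == b) || (v1 == b).
  by case/or4P: h1 => /eqP E; subst; rewrite ?eqxx ?orbT // in u1a v1a *.
have ha2 : (u2 == a) || (v2 == a).
  by case/or4P: h2 => /eqP E; subst; rewrite ?eqxx ?orbT // in u2b v2b *.
have [z [az bz Hz1 Hz2]] : exists z, [/\ a != z, b != z,
     ((u1 == b) && (v1 == z)) || ((u1 == z) && (v1 == b)) &
     ((u2 == a) && (v2 == z)) || ((u2 == z) && (v2 == a))].
  exists (if u1 == b then v1 else u1).
  case/orP: hb1 => /eqP E1; subst; case/orP: ha2 => /eqP E2; subst;
  case/or4P: h12 => /eqP E; subst; rewrite ?eqxx // in ab u1a v1a u2b v2b d1 d2 *;
  rewrite ?eqxx ?(negbTE d1) /=; split; rewrite ?eqxx ?andbT ?orbT //; rewrite eq_sym //.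
pose s := [:: (a, b); (b, a); (a, z); (z, a); (b, z); (z, b)].
have mem3 : forall u v, u != v ->
    [|| u == a, u == b, v == a | v == b] ->
    [|| u == b, u == z, v == b | v == z] ->
    [|| u == a, u == z, v == a | v == z] -> (u, v) \in s.
  move=> u v uv h1' h2' h3'.
  have Hu : [|| u == a, u == b | u == z].
    case: (boolP [|| u == a, u == b | u == z]) => // /norP[ua /norP[ub uz]].
    rewrite (negbTE ua) (negbTE ub) (negbTE uz) /= in h1' h2' h3'.
    case/orP: h1' => /eqP E; subst.
      by case/orP: h2' => /eqP E; subst; rewrite ?eqxx in ab az.
    by case/orP: h3' => /eqP E; subst; rewrite ?eqxx in ab bz.
  have Hv : [|| v == a, v == b | v == z].
    case: (boolP [|| v == a, v == b | v == z]) => // /norP[ua /norP[ub uz]].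
    rewrite (negbTE ua) (negbTE ub) (negbTE uz) /= !orbF in h1' h2' h3'.
    case/orP: h1' => /eqP E; subst.
      by case/orP: h2' => /eqP E; subst; rewrite ?eqxx in ab az.
    by case/orP: h3' => /eqP E; subst; rewrite ?eqxx in ab bz.
  rewrite /s; case/or3P: Hu => /eqP Eu; case/or3P: Hv => /eqP Ev; subst u v;
    rewrite ?eqxx // in uv; by rewrite !in_cons !xpair_eqE !eqxx ?orbT.
have sub : N \subset [set p | p \in s].
  apply/fintype.subsetP => [[u v]] pN; rewrite inE.
  have d := Hd _ pN; have ha := Hi _ _ pN abN; have hb := Hi _ _ pN p1N;
  have hc := Hi _ _ pN p2N; rewrite /= in d ha hb hc.
  apply: mem3 => //.
    by case/orP: Hz1 => /andP[/eqP E1 /eqP E2]; subst u1 v1; move: hb; case/or4P => ->; rewrite ?orbT.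
  by case/orP: Hz2 => /andP[/eqP E1 /eqP E2]; subst u2 v2; move: hc; case/or4P => ->; rewrite ?orbT.
apply: (leq_trans (subset_leq_card sub)).
have -> : #|[set p | p \in s]| = #|s| by apply: eq_card => p; rewrite inE.
apply: (leq_trans (card_size s)).
have h : 6 <= 2 * n.-1 by clear -n3; lia.
exact: h.
Qed.

Lemma card_sumb (T : finType) (O : {set T}) (P : pred T) :
  #|[set p in O | P p]| = \sum_(p in O) (P p : nat).
Proof.
rewrite -sum1_card (eq_bigl (fun p => (p \in O) && P p)); last by move=> p; rewrite inE.
by rewrite big_mkcondr; apply: eq_bigr => p _; case: (P p).
Qed.

Lemma card_uniq1 q n (C : {set word q n}) k :
  #|[set x in C | uniq1 C x k]| <= q.
Proof.
rewrite -(card_in_imset (f := fun x : word q n => x k)).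
  by apply: (leq_trans (max_card _)); rewrite card_ord.
move=> x y; rewrite !inE => /andP[xC /forall_inP ux] /andP[yC _] e.
by apply/esym/eqP; apply: (implyP (ux y yC)); rewrite e.
Qed.

Lemma card_uniq2 q n (C : {set word q n}) p :
  #|[set x in C | uniq2 C x p]| <= q * q.
Proof.
rewrite -(card_in_imset (f := fun x : word q n => (x p.1, x p.2))).
  by apply: (leq_trans (max_card _)); rewrite card_prod card_ord.
move=> x y; rewrite !inE => /andP[xC /forall_inP ux] /andP[yC _] [e1 e2].
by apply/esym/eqP; apply: (implyP (ux y yC)); rewrite e1 e2 !eqxx.
Qed.

Lemma card_offdiag n : #|[set p : 'I_n * 'I_n | p.1 != p.2]| = n * n - n.
Proof.
have E := cardsC [set p : 'I_n * 'I_n | p.1 == p.2].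
have E1 : ~: [set p : 'I_n * 'I_n | p.1 == p.2] = [set p : 'I_n * 'I_n | p.1 != p.2].
  by apply/setP => p; rewrite !inE.
have E2 : #|[set p : 'I_n * 'I_n | p.1 == p.2]| = n.
  have -> : [set p : 'I_n * 'I_n | p.1 == p.2] = [set (i, i) | i in 'I_n].
    apply/setP => [[u v]]; rewrite inE /=; apply/eqP/imsetP => [->|[i _ [-> ->]]] //.
    by exists v.
  by rewrite card_imset ?card_ord // => i j [].
rewrite E1 E2 card_prod card_ord in E; lia.
Qed.

Lemma upper c q (C : {set word q c.+2}) : 2 <= c -> frameproof c C ->
  c * #|C| <= c.+2 * (q * q) + c * c.+2 * q.
Proof.
move=> c2 FC.
pose C' := [set x in C | [forall k, ~~ uniq1 C x k]].
pose O := [set p : 'I_c.+2 * 'I_c.+2 | p.1 != p.2].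
have hC : #|C| <= #|C'| + c.+2 * q.
  have E := cardsID C' C.
  have E1 : C :&: C' = C' by apply/finset.setIidPr/fintype.subsetP => x; rewrite inE => /andP[].
  rewrite E1 in E; rewrite -E leq_add2l.
  apply: (@leq_trans (\sum_(x in C :\: C') \sum_k (uniq1 C x k : nat))).
    rewrite -sum1_card; apply: leq_sum => x; rewrite !inE => /andP[H xC].
    rewrite xC /= in H; case/forallPn: H => k; rewrite negbK => uk.
    by rewrite (bigD1 k) //= uk.
  rewrite exchange_big /=.
  apply: (@leq_trans (\sum_(k < c.+2) q)); last by rewrite sum_nat_const card_ord.
  apply: leq_sum => k _; rewrite -card_sumb.
  apply: leq_trans (card_uniq1 C k); apply: subset_leq_card; apply/fintype.subsetP => x.
  by rewrite !inE => /andP[/andP[_ ->] ->].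
have hU : forall x, x \in C' -> (c.+1 * c) <= #|[set p in O | uniq2 C x p]|.
  move=> x; rewrite inE => /andP[xC /forallP nu].
  have E := cardsID [set p | uniq2 C x p] O.
  rewrite card_offdiag in E.
  have E1 : O :&: [set p | uniq2 C x p] = [set p in O | uniq2 C x p].
    by apply/setP => p; rewrite !inE.
  have hN : #|O :\: [set p | uniq2 C x p]| <= 2 * c.+1.
    apply: ekr => //.
      by move=> p; rewrite !inE => /andP[_ ->].
    move=> [a b] [d e]; rewrite !inE /= => /andP[nu1 ab] /andP[nu2 de].
    apply/negPn/negP => H.
    have us : uniq [:: a; b; d; e].
      rewrite /= !inE !negb_or; move: H; rewrite !negb_or => /and4P[h1 h2 h3 h4].
      by rewrite ab h1 h2 h3 h4 de.
    by case/orP: (two_pairs FC xC nu us) => h; [move: nu1 | move: nu2]; rewrite h.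
  rewrite E1 in E; lia.
have hS : #|C'| * (c.+1 * c) <= (c.+2 * c.+2 - c.+2) * (q * q).
  apply: (@leq_trans (\sum_(x in C') #|[set p in O | uniq2 C x p]|)).
    by rewrite -sum_nat_const; apply: leq_sum.
  under eq_bigr do rewrite card_sumb.
  rewrite exchange_big /= -card_offdiag -/O -sum_nat_const.
  apply: leq_sum => p _; rewrite -card_sumb.
  apply: leq_trans (card_uniq2 C p); apply: subset_leq_card; apply/fintype.subsetP => x.
  by rewrite !inE => /andP[/andP[-> _] ->].
have hC' : c * #|C'| <= c.+2 * (q * q).
  have : c.+1 * (c * #|C'|) <= c.+1 * (c.+2 * (q * q)).
    move: hS; have -> : c.+2 * c.+2 - c.+2 = c.+1 * c.+2 by lia.
    move: #|C'| (q * q) => X Y; nia.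
  by rewrite leq_pmul2l.
nia.
Qed.

Definition gg (F : fieldType) (v i : option F) : F :=
  match v, i with Some v, Some i => (i - v)%R | _, _ => 1%R end.

Lemma gg_neq0 (F : fieldType) (v i : option F) : v != i -> gg v i != 0%R.
Proof.
case: v => [v|]; case: i => [i|] //= vi; rewrite ?oner_neq0 //.
by rewrite subr_eq0 eq_sym; apply: contra vi => /eqP->.
Qed.

Lemma gg_det (F : fieldType) (v w i j : option F) :
  v != w -> i != j -> i != v -> i != w -> j != v -> j != w ->
  (gg v i * gg w j != gg w i * gg v j)%R.
Proof.
have sn (x y : F) : (Some x != Some y) = (x != y) by [].
case: v => [v|]; case: w => [w|]; case: i => [i|]; case: j => [j|] //=;
rewrite ?sn => vw ij iv iw jv jw; rewrite -subr_eq0 ?mul1r ?mulr1.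
- have -> : ((i - v) * (j - w) - (i - w) * (j - v) = (i - j) * (v - w))%R by ring.
  by rewrite mulf_neq0 // subr_eq0.
- have -> : ((i - v) - (i - w) = (w - v))%R by ring.
  by rewrite subr_eq0 eq_sym.
- have -> : ((j - w) - (j - v) = (v - w))%R by ring.
  by rewrite subr_eq0.
- have -> : ((i - v) - (j - v) = (i - j))%R by ring.
  by rewrite subr_eq0.
- have -> : ((j - w) - (i - w) = (j - i))%R by ring.
  by rewrite subr_eq0 eq_sym.
Qed.

Lemma decode m e r e' r' : r < m -> r' < m -> e * m + r = e' * m + r' -> e = e' /\ r = r'.
Proof.
move=> hr hr' E; have m0 : 0 < m by apply: leq_ltn_trans hr.
split.
  by have := congr1 (divn^~ m) E; rewrite /= !divnMDl // !divn_small // !addn0.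
by have := congr1 (modn^~ m) E; rewrite /= !modnMDl !modn_small.
Qed.

Lemma modcancel k m x y : coprime k m -> x < m -> y < m ->
  k * x = k * y %[mod m] -> x = y.
Proof.
move=> cop; wlog: x y / x <= y => [H hx hy E|xy hx hy E].
  by case: (leqP x y) => xy; [apply: H | apply/esym/H => //; apply: ltnW].
move/eqP: E; rewrite eq_sym eqn_mod_dvd ?leq_mul2l ?xy ?orbT // -mulnBr.
rewrite Gauss_dvdr; last by rewrite coprime_sym.
move=> dv; have : y - x < m by apply: leq_ltn_trans (leq_subr _ _) hy.
move=> lt; have := dvdn_leq; case: (posnP (y - x)) => [|p]; first by lia.
by move=> /(_ _ _ p dv); lia.
Qed.

Lemma Bpart m (a b a' b' : 'I_m) (i j : nat) : i < j -> coprime (j - i) m ->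
  (a + i * b) %% m = (a' + i * b') %% m -> (a + j * b) %% m = (a' + j * b') %% m ->
  a = a' /\ b = b'.
Proof.
move=> ij cop E1 E2.
have ej : j = i + (j - i) by lia.
rewrite ej !mulnDl !addnA in E2.
move: E2; rewrite -modnDml E1 modnDml => /eqP; rewrite eqn_modDl => /eqP E.
have eb := modcancel cop (ltn_ord b) (ltn_ord b') E.
have eb' : b = b' by apply: val_inj.
split => //; apply: val_inj => /=.
move: E1; rewrite eb => /eqP; rewrite eqn_modDr => /eqP.
by rewrite !modn_small.
Qed.

Definition enc (F : finFieldType) (u : F) : nat := index u (enum [pred x : F | x != 0%R]).

Lemma enc_lt (F : finFieldType) (u : F) : u != 0%R -> enc u < #|F|.-1.
Proof.
move=> u0; rewrite /enc -(cardC1 (0%R : F)) cardE.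
have -> : enum (predC1 0%R) = enum [pred x : F | x != 0%R] by apply: eq_enum => x.
by rewrite index_mem mem_enum.
Qed.

Lemma enc_inj (F : finFieldType) (u u' : F) : u != 0%R -> u' != 0%R -> enc u = enc u' -> u = u'.
Proof.
move=> u0 u0' E.
have h1 : u \in enum [pred x : F | x != 0%R] by rewrite mem_enum.
have h2 : u' \in enum [pred x : F | x != 0%R] by rewrite mem_enum.
by rewrite -(nth_index 0%R h1) -(nth_index 0%R h2); congr nth.
Qed.

Definition cw (F : finFieldType) (c m q' : nat) (σ : 'I_c.+2 -> option F)
  (d : 'I_c.+2 * F * 'I_m * 'I_m) : word q'.+1 c.+2 :=
  [ffun i => if i == d.1.1.1 then inord (c * m)
             else inord (enc (d.1.1.2 * gg (σ d.1.1.1) (σ i))%R * m + (d.1.2 + i * d.2) %% m)].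

Lemma cw_v (F : finFieldType) c m q' (σ : 'I_c.+2 -> option F) (d : 'I_c.+2 * F * 'I_m * 'I_m) :
  c * m <= q' -> val (cw q' σ d d.1.1.1) = c * m.
Proof. by move=> cm; rewrite ffunE eqxx /= inordK // ltnS. Qed.

Lemma cw_i (F : finFieldType) c m q' (σ : 'I_c.+2 -> option F) (d : 'I_c.+2 * F * 'I_m * 'I_m) i :
  #|F| = c.+1 -> injective σ -> c * m <= q' -> d.1.1.2 != 0%R -> i != d.1.1.1 ->
  val (cw q' σ d i) = enc (d.1.1.2 * gg (σ d.1.1.1) (σ i))%R * m + (d.1.2 + i * d.2) %% m
  /\ enc (d.1.1.2 * gg (σ d.1.1.1) (σ i))%R * m + (d.1.2 + i * d.2) %% m < c * m.
Proof.
move=> HF σi cm s0 iv.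
have m0 : 0 < m by case: (d.2) => x; case: (m).
have hlt : enc (d.1.1.2 * gg (σ d.1.1.1) (σ i))%R * m + (d.1.2 + i * d.2) %% m < c * m.
  have he : enc (d.1.1.2 * gg (σ d.1.1.1) (σ i))%R < c.
    have := @enc_lt F (d.1.1.2 * gg (σ d.1.1.1) (σ i))%R; rewrite HF /=; apply.
    rewrite mulf_neq0 // gg_neq0 //; apply: contra iv => /eqP /σi ->; by [].
  have hm := ltn_pmod (d.1.2 + i * d.2) m0.
  by nia.
rewrite ffunE (negbTE iv) /= inordK //.
by apply: leq_trans hlt _; apply: leq_trans cm _.
Qed.

Lemma core (F : finFieldType) c m q' (σ : 'I_c.+2 -> option F)
  (d d' : 'I_c.+2 * F * 'I_m * 'I_m) (i j : 'I_c.+2) :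
  #|F| = c.+1 -> injective σ -> c * m <= q' ->
  (forall k, 0 < k < c.+2 -> coprime k m) ->
  d.1.1.2 != 0%R -> d'.1.1.2 != 0%R -> i != j -> i != d.1.1.1 -> j != d.1.1.1 ->
  cw q' σ d i = cw q' σ d' i -> cw q' σ d j = cw q' σ d' j -> d = d'.
Proof.
move=> HF σi cm cop.
case: d => [[[v s] a] b]; case: d' => [[[w t] a'] b'] /= s0 t0 ij iv jv Ei Ej.
have [Vi Li] := cw_i (d := (v, s, a, b)) HF σi cm s0 iv.
have [Vj Lj] := cw_i (d := (v, s, a, b)) HF σi cm s0 jv.
have Vw := cw_v (q' := q') σ (w, t, a', b') cm.
rewrite /= in Vi Li Vj Lj Vw.

have iw : i != w.
  by apply/eqP => E; move: Li; rewrite -Vi Ei E Vw ltnn.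
have jw : j != w.
  by apply/eqP => E; move: Lj; rewrite -Vj Ej E Vw ltnn.
have [Vi' Li'] := cw_i (d := (w, t, a', b')) HF σi cm t0 iw.
have [Vj' Lj'] := cw_i (d := (w, t, a', b')) HF σi cm t0 jw.
rewrite /= in Vi' Li' Vj' Lj'.
have m0 : 0 < m by case: (b) => x; case: (m).
move/(congr1 (@nat_of_ord _)): Ei; rewrite Vi Vi' /= => /decode [| |Ei1 Ei2]; try exact: ltn_pmod.
move/(congr1 (@nat_of_ord _)): Ej; rewrite Vj Vj' /= => /decode [| |Ej1 Ej2]; try exact: ltn_pmod.
have [ea eb] : a = a' /\ b = b'.
  case: (ltngtP i j) => [ltij|ltji|eij]; last by move: ij; rewrite (val_inj eij) eqxx.
    apply: (Bpart (i := i) (j := j)) => //; apply: cop; have := ltn_ord i; have := ltn_ord j; lia.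
  apply: (Bpart (i := j) (j := i)) => //; apply: cop; have := ltn_ord i; have := ltn_ord j; lia.
subst a' b'.
have nz (x y : 'I_c.+2) : x != y -> gg (σ x) (σ y) != 0%R.
  by move=> xy; apply: gg_neq0; apply: contra xy => /eqP /σi ->.
have Ti : (s * gg (σ v) (σ i) = t * gg (σ w) (σ i))%R.
  by apply: enc_inj Ei1; apply: mulf_neq0 => //; apply: nz; rewrite eq_sym.
have Tj : (s * gg (σ v) (σ j) = t * gg (σ w) (σ j))%R.
  by apply: enc_inj Ej1; apply: mulf_neq0 => //; apply: nz; rewrite eq_sym.
case: (eqVneq v w) => [vw | vw].
  subst w; have st : s = t.
    by apply: (mulIf (nz v i _)) Ti; rewrite eq_sym.
  by rewrite st.
exfalso.
have D := @gg_det F (σ v) (σ w) (σ i) (σ j).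
rewrite !(inj_eq σi) vw ij iv iw jv jw in D.
have E2 : (s * t * (gg (σ v) (σ i) * gg (σ w) (σ j)) =
           s * t * (gg (σ w) (σ i) * gg (σ v) (σ j)))%R.
  transitivity ((s * gg (σ v) (σ i)) * (t * gg (σ w) (σ j)))%R; first by ring.
  rewrite Ti -Tj; ring.
have E3 := mulfI (mulf_neq0 s0 t0) E2.
by move: (D isT isT isT isT isT isT); rewrite E3 eqxx.
Qed.


Lemma two_others n (v : 'I_n.+3) : exists i j : 'I_n.+3, [&& i != j, i != v & j != v].
Proof.
pose i0 : 'I_n.+3 := Ordinal (isT : 0 < n.+3).
pose i1 : 'I_n.+3 := Ordinal (isT : 1 < n.+3).
pose i2 : 'I_n.+3 := Ordinal (isT : 2 < n.+3).
case: (eqVneq v i0) => [->|v0]; first by exists i1, i2.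
case: (eqVneq v i1) => [->|v1]; first by exists i0, i2.
by exists i0, i1; rewrite !(eq_sym _ v) v0 v1.
Qed.

Lemma lower (F : finFieldType) c m q' (σ : 'I_c.+2 -> option F) :
  #|F| = c.+1 -> injective σ -> 2 <= c -> c * m <= q' ->
  (forall k, 0 < k < c.+2 -> coprime k m) ->
  c.+2 * c * (m * m) <= M c c.+2 q'.+1.
Proof.
move=> HF σi c2 cm cop.
pose Dom := [set d : 'I_c.+2 * F * 'I_m * 'I_m | d.1.1.2 != 0%R].
pose C := [set cw q' σ d | d in Dom].
have inj : {in Dom &, injective (cw q' σ)}.
  move=> d d'; rewrite !inE => s0 t0 E.
  case: c c2 σ σi cm cop d d' s0 t0 E HF Dom C => [|[|c']] // _ σ σi cm cop d d' s0 t0 E HF Dom C.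
  have [i [j /and3P[ij iv jv]]] := two_others d.1.1.1.
  by apply: (core HF σi cm cop s0 t0 ij iv jv); rewrite E.
have cardC : #|C| = c.+2 * c * (m * m).
  rewrite card_in_imset //.
  have -> : Dom = finset.setX (finset.setX (finset.setX [set: 'I_c.+2] [set~ 0%R]) [set: 'I_m]) [set: 'I_m].
    by apply/setP => d; rewrite !inE /= !andbT.
  by rewrite !cardsX !cardsT !card_ord cardsC1 HF mulnA.
have FC : frameproof c C.
  apply/forallP => P; apply/implyP => /andP[PC Pc]; apply/eqP/setP => x.
  rewrite inE; apply/andP/idP => [[xd xC] | xP]; last first.
    by split; [exact: (fintype.subsetP (desc_self P)) | exact: (fintype.subsetP PC)].
  case: (boolP (x \in P)) => // xP.
  case/imsetP: xC => d dD xd'; subst x.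
  move: xd; rewrite inE => /forallP xd.
  pose f i := odflt (cw q' σ d) [pick y in P | cw q' σ d i == y i].
  have fP i : (f i \in P) && (cw q' σ d i == f i i).
    rewrite /f; case: pickP => [y /andP[-> ->] //| none] /=.
    by case/existsP: (xd i) => y /andP[yP e]; move: (none y); rewrite yP e.
  case: (boolP (dinjectiveb f [set~ d.1.1.1])) => [/dinjectiveP finj | /dinjectivePn].
    have := card_in_imset finj; rewrite cardsC1 card_ord /= => E.
    have : #|[set f i | i in [set~ d.1.1.1]]| <= #|P|.
      apply: subset_leq_card; apply/fintype.subsetP => y /imsetP[i _ ->].
      by case/andP: (fP i).
    by rewrite E => h; move: (leq_trans h Pc); rewrite ltnn.
  move=> [i iA [j jA fij]].
  rewrite !inE in iA jA; case/andP: jA => ji jv; move: iA => iv.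
  have /andP[yP ei] := fP i; have /andP[_ ej] := fP j.
  rewrite -fij in ej.
  have := fintype.subsetP PC _ yP; case/imsetP => d' dD' yd'.
  rewrite yd' in ei ej.
  rewrite !inE in dD dD'.
  have := core HF σi cm cop dD dD' (ji : j != i) jv iv (eqP ej) (eqP ei).
  by move=> edd; move: xP; rewrite edd -yd' yP.
rewrite -cardC; exact: leq_bigmax_cond.
Qed.

Lemma sq q X D : q <= X + D -> q * q <= X * X + 2 * D * q.
Proof.
move=> h; case: (leqP q X) => h2; first by nia.
have : q - X <= D by lia.
nia.
Qed.

Lemma lowerq c (F : finFieldType) (σ : 'I_c.+2 -> option F) q' :
  #|F| = c.+1 -> injective σ -> 2 <= c -> c <= q' ->
  c.+2 * (q'.+1 * q'.+1) <= c * M c c.+2 q'.+1 + 2 * (c * (c.+1)`!) * c.+2 * q'.+1.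
Proof.
move=> HF σi c2 cq.
set P := (c.+1)`!; have P0 : 0 < P := fact_gt0 _.
have cP0 : 0 < c * P by rewrite muln_gt0 P0 andbT; apply: leq_trans c2.
set K := (q' - c) %/ (c * P).
set m := P * K + 1.
have e : c * m = K * (c * P) + c by rewrite /m mulnDr muln1 mulnA [K * _]mulnC.
have cm : c * m <= q'.
  have := leq_trunc_div (q' - c) (c * P); rewrite -/K e; lia.
have cop : forall k, 0 < k < c.+2 -> coprime k m.
  move=> k /andP[k0 kc]; have dk : k %| P * K.
    by apply: dvdn_mulr; apply: dvdn_fact; rewrite k0.
  by rewrite /coprime /m -(divnK dk) gcdnMDl gcdn1.
have low := lower HF σi c2 cm cop.
have hq : q'.+1 <= c * m + c * P.
  have := ltn_ceil (q' - c) cP0; rewrite -/K e; lia.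
have h := sq hq.
move: low; move: (M c c.+2 q'.+1) => Mv low.
have h2 : c.+2 * (c * m * (c * m)) <= c * Mv.
  have E : c.+2 * (c * m * (c * m)) = c * (c.+2 * c * (m * m)) by ring.
  by rewrite E leq_mul2l low orbT.
have h4 : c.+2 * (q'.+1 * q'.+1) <= c.+2 * (c * m * (c * m) + 2 * (c * P) * q'.+1).
  by rewrite leq_mul2l h orbT.
rewrite mulnDr in h4.
apply: (leq_trans h4); apply: leq_add => //.
by apply: eq_leq; ring.
Qed.

Lemma nat_up c n Mn : 0 < n -> c * Mn <= c.+2 * (n*n) + c*c.+2*n ->
  Mn * (c * n.+1) <= (c.+2 * n.+1 + 2 * c.+2 * c) * (n ^ 2).
Proof.
move=> n0 h.
have h1 : c * Mn * n.+1 <= (c.+2 * (n*n) + c*c.+2*n) * n.+1 by rewrite leq_mul2r h orbT.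
have h2 : c * c.+2 * n * n.+1 <= 2 * c.+2 * c * (n * n).
  have : n.+1 <= 2 * n by lia.
  move=> h3; have := leq_mul2l (c * c.+2 * n) n.+1 (2 * n); rewrite h3 orbT => h4.
  apply: leq_trans h4 _; apply: eq_leq; ring.
have E1 : Mn * (c * n.+1) = c * Mn * n.+1 by ring.
have E2 : (c.+2 * n.+1 + 2 * c.+2 * c) * (n ^ 2) = c.+2 * (n*n) * n.+1 + 2 * c.+2 * c * (n * n) by ring.
rewrite E1 E2; apply: leq_trans h1 _; rewrite mulnDl leq_add2l //.
Qed.

Lemma nat_lo c n Mn Pc : 0 < n -> c.+2 * (n*n) <= c*Mn + 2*Pc*c.+2*n ->
  c.+2 * (n^2 * (c*n.+1)) <= (Mn*(c*n.+1) + 4*Pc*c.+2 * n^2) * c.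
Proof.
move=> n0 h.
have h1 : c.+2 * (n*n) * (c * n.+1) <= (c*Mn + 2*Pc*c.+2*n) * (c * n.+1) by rewrite leq_mul2r h orbT.
have h2 : 2*Pc*c.+2*n * (c * n.+1) <= 4*Pc*c.+2 * (n*n) * c.
  have : n.+1 <= 2 * n by lia.
  move=> h3; have := leq_mul2l (2*Pc*c.+2*n*c) n.+1 (2 * n); rewrite h3 orbT => h4.
  apply: leq_trans _ (leq_trans h4 _); apply: eq_leq; ring.
have E1 : c.+2 * (n^2 * (c*n.+1)) = c.+2 * (n*n) * (c * n.+1) by ring.
have E2 : (Mn*(c*n.+1) + 4*Pc*c.+2 * n^2) * c = c*Mn * (c * n.+1) + 4*Pc*c.+2 * (n*n) * c by ring.
rewrite E1 E2; apply: leq_trans h1 _; rewrite mulnDl leq_add2l //.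
Qed.

Lemma Mup c q : 2 <= c -> c * M c c.+2 q <= c.+2 * (q * q) + c * c.+2 * q.
Proof.
move=> c2; set B := _ + _.
have c0 : 0 < c by apply: leq_trans c2.
have h : M c c.+2 q <= B %/ c.
  apply/bigmax_leqP => C FC; rewrite leq_divRL // mulnC; exact: upper.
apply: leq_trans (_ : c * (B %/ c) <= B); first by rewrite leq_mul2l h orbT.
by rewrite mulnC leq_trunc_div.
Qed.

Local Open Scope classical_set_scope.
Local Open Scope ring_scope.

Lemma frac_le (R : realFieldType) (a b c d : nat) : (0 < b)%N -> (0 < d)%N ->
  (a * d <= c * b)%N -> a%:R / b%:R <= c%:R / d%:R :> R.
Proof.
move=> b0 d0 h.
by rewrite ler_pdivrMr ?ltr0n // mulrAC ler_pdivlMr ?ltr0n // -!natrM ler_nat.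
Qed.

Lemma eq_lo (R : numFieldType) (a b e c n : nat) : b != 0%N -> c != 0%N -> n != 0%N ->
  a%:R / b%:R + e%:R / c%:R / n%:R = (a * (c * n) + e * b)%:R / (b * (c * n))%:R :> R.
Proof.
move=> b0 c0 n0; rewrite !natrD !natrM; field.
by rewrite !pnatr_eq0 b0 c0 n0.
Qed.

Lemma eq_hi (R : numFieldType) (a c e n : nat) : c != 0%N -> n != 0%N ->
  a%:R / c%:R + e%:R / n%:R = (a * n + e * c)%:R / (c * n)%:R :> R.
Proof.
move=> c0 n0; rewrite !natrD !natrM; field.
by rewrite !pnatr_eq0 c0 n0.
Qed.

Theorem theorem4 (R : realType) (c : nat) :
  (2 <= c)%N -> prime_power c.+1 ->
  (fun q : nat => (M c c.+2 q)%:R / (q ^ 2)%:R : R) @ \oo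
    --> ((c.+2)%:R / c%:R : R).
Proof.
move=> c2 [p [k [pp [k0 ek]]]].
have [F _ HF0] := pPrimePowerField pp k0.
have HF : #|F| = c.+1 by rewrite HF0 ek.
have [σ σi] : exists σ : 'I_c.+2 -> option F, injective σ.
  have HO : #|{: option F}| = c.+2 by rewrite card_option HF.
  exists (fun i => enum_val (cast_ord (esym HO) i)).
  by move=> i j /enum_val_inj /cast_ord_inj.
have c0 : (0 < c)%N by apply: leq_trans c2.
set Pc := (c * (c.+1)`!)%N.
set E := (4 * Pc * c.+2)%N.
set l := (c.+2)%:R / c%:R : R.
apply: (@squeeze_cvgr _ _ _ _ (fun n => l - (E%:R / c%:R) * harmonic n)
                              (fun n => l + (2 * c.+2)%:R * harmonic n)).
- exists c.+1 => // n /= hn.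
  case: n hn => [//|q'] hn; rewrite ltnS in hn.
  have cq : (0 < c)%N by [].
  apply/andP; split.
    rewrite lerBlDr.
    rewrite eq_lo ?expn_eq0 -?lt0n //.
    apply: frac_le => //; first by rewrite muln_gt0 expn_gt0 muln_gt0 c0.
    apply: nat_lo => //; exact: lowerq HF σi c2 hn.
  rewrite /l eq_hi -?lt0n //.
  apply: frac_le => //; first by rewrite !muln_gt0 c0.
  by apply: nat_up => //; exact: Mup.
- have H : (fun n => l - E%:R / c%:R * harmonic n) @ \oo --> l - E%:R / c%:R * 0.
    apply: cvgB; first exact: cvg_cst.
    apply: cvgM; [exact: cvg_cst | exact: cvg_harmonic].
  by rewrite mulr0 subr0 in H.
- have H : (fun n => l + (2 * c.+2)%:R * harmonic n) @ \oo --> l + (2 * c.+2)%:R * 0.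
    apply: cvgD; first exact: cvg_cst.
    apply: cvgM; [exact: cvg_cst | exact: cvg_harmonic].
  by rewrite mulr0 addr0 in H.
Qed.
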